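(* Let $(S,K,I)$ be a split graph, and let $u\in I$ and $z\in K$ be such that $uxz$ is a path in $A_4(S)$ for some $x\in K$. Then $u$ and $z$ are joined by a path $P$ in $A_4(S)$ with $V(P)\setminus\{z\}\subseteq I$ and $|V(P)|\le 4$.
   Context: All graphs are finite and simple. A split graph is a graph $S$ whose vertex set is a disjoint union $V(S)=K\,\dot\cup\,I$ with $K$ a clique and $I$ an independent set; $(K,I)$ is called a bipartition of $S$, and $(S,K,I)$ denotes $S$ together with this fixed bipartition. A 2-switch in a graph $G$ is performed on four distinct vertices $a,b,c,d$ with $ab,cd\in E(G)$ and $ac,bd\notin E(G)$: it deletes $ab,cd$ and adds $ac,bd$; $a,b,c,d$ are said to participate in it. $A_4(G)$ is the graph with vertex set $V(G)$ in which distinct $u,v$ are adjacent iff some 2-switch on $G$ has both $u$ and $v$ among its participating vertices. *)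

(* Defs.v *)
From mathcomp Require Import all_boot.
Set Implicit Arguments. Unset Strict Implicit. Unset Printing Implicit Defensive.

Definition simple_graph (T : finType) (e : rel T) : Prop :=
  symmetric e /\ irreflexive e.

Definition split_bipartition (T : finType) (e : rel T) (K I : {set T}) : Prop :=
  [disjoint K & I] /\ K :|: I = [set: T] /\
  (forall x y, x \in K -> y \in K -> x != y -> e x y) /\
  (forall x y, x \in I -> y \in I -> ~~ e x y).

Definition two_switch (T : finType) (e : rel T) (a b c d : T) : bool :=
  [&& uniq [:: a; b; c; d], e a b, e c d, ~~ e a c & ~~ e b d].

Definition A4 (T : finType) (e : rel T) : rel T := fun u v =>
  (u != v) && [exists a, exists b, exists c, exists d,
     [&& two_switch e a b c d, u \in [:: a; b; c; d] & v \in [:: a; b; c; d]]].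

(* Main.v *)
Require Import Defs.
From mathcomp Require Import all_boot.
Set Implicit Arguments. Unset Strict Implicit.

Section Aux.
Variables (T : finType) (e : rel T) (K I : {set T}).
Hypothesis hsym : symmetric e.
Hypothesis hirr : irreflexive e.
Hypothesis hsp : split_bipartition e K I.

Definition sw k1 i1 k2 i2 := [&& k1 \in K, k2 \in K, i1 \in I, i2 \in I,
  k1 != k2, e k1 i1, e k2 i2, ~~ e k1 i2 & ~~ e k2 i1].

Lemma hKI t : (t \in I) = (t \notin K).
Proof.
case: hsp => hd [hc _].
have : t \in K :|: I by rewrite hc inE.
rewrite inE; case hK: (t \in K) => /= hI //.
by rewrite (disjointFr hd hK).
Qed.

Lemma neqKI a b : a \in K -> b \in I -> a != b.
Proof. by move=> ha hb; apply/eqP => ab; move: hb; rewrite hKI -ab ha. Qed.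

Lemma neqE a b c : e a b -> ~~ e a c -> b != c.
Proof. by move=> h1; apply: contraNneq => <-. Qed.

Lemma mkA4 k1 i1 k2 i2 v w : sw k1 i1 k2 i2 ->
  v \in [:: k1; i1; k2; i2] -> w \in [:: k1; i1; k2; i2] -> v != w -> A4 e v w.
Proof.
case/and5P => hk1 hk2 hi1 hi2 /and5P [hk e1 e2 n1 n2] hv hw hvw.
rewrite /A4 hvw /=; apply/existsP; exists k1; apply/existsP; exists i1.
apply/existsP; exists i2; apply/existsP; exists k2.
have hn : i1 != i2 by apply: neqE e1 n1.
rewrite /two_switch /= !inE e1 (hsym i2) e2 n1 (hsym i1) n2 /=.
rewrite !negb_or (neqKI hk1 hi1) (neqKI hk1 hi2) hk hn (eq_sym i1 k2) (neqKI hk2 hi1) (eq_sym i2) (neqKI hk2 hi2) /=.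
move: hv hw; rewrite !inE.
by case/or4P => /eqP ->; case/or4P => /eqP ->; rewrite !eqxx ?orbT.
Qed.

Lemma getsw v w : A4 e v w -> exists k1 i1 k2 i2, [&& sw k1 i1 k2 i2,
  v \in [:: k1; i1; k2; i2] & w \in [:: k1; i1; k2; i2]].
Proof.
case/andP => _ /existsP [a /existsP [b /existsP [c /existsP [d]]]].
case/and3P => /and5P [hu eab ecd nac nbd] hv hw.
move: hu; rewrite /= !inE !negb_or => /and4P [/and3P[nab nac' nad] /andP[nbc nbd'] ncd _].
case: hsp => _ [_ [hK hI]].
have KK x y : x \in K -> y \in K -> x != y -> e x y by apply: hK.
have II x y : x \in I -> y \in I -> ~~ e x y by apply: hI.
case ha: (a \in K).
- have hc: c \notin K by apply/negP => hc; move: nac; rewrite KK.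
  have hd: d \in K by apply: contraTT ecd; rewrite -!hKI => hd; apply: II; rewrite // hKI.
  have hb: b \notin K by apply/negP => hb; move: nbd; rewrite KK.
  exists a, b, d, c; apply/and3P; split.
  + by rewrite /sw ha hd !hKI hb hc nad eab (hsym d) ecd nac (hsym d) nbd.
  + by move: hv; rewrite !inE; case/or4P => /eqP ->; rewrite !eqxx ?orbT.
  + by move: hw; rewrite !inE; case/or4P => /eqP ->; rewrite !eqxx ?orbT.
- have hb: b \in K by apply: contraTT eab; rewrite -!hKI => hb; apply: II; rewrite // hKI ha.
  have hd: d \notin K by apply/negP => hd; move: nbd; rewrite KK.
  have hc: c \in K by apply: contraTT ecd; rewrite -!hKI => hc; apply: II; rewrite // hKI.
  exists b, a, c, d; apply/and3P; split.
  + by rewrite /sw hb hc !hKI ha hd nbc (hsym b) eab ecd nbd (hsym c) nac.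
  + by move: hv; rewrite !inE; case/or4P => /eqP ->; rewrite !eqxx ?orbT.
  + by move: hw; rewrite !inE; case/or4P => /eqP ->; rewrite !eqxx ?orbT.
Qed.

Lemma swC k1 i1 k2 i2 : sw k1 i1 k2 i2 -> sw k2 i2 k1 i1.
Proof.
case/and5P => ? ? ? ? /and5P [? ? ? ? ?].
by rewrite /sw; apply/and5P; split=> //; apply/and5P; split; rewrite // eq_sym.
Qed.


Lemma shapeIK v w : A4 e v w -> v \in I -> w \in K ->
  (exists a b, sw w v a b) \/ (exists a b, sw a v w b).
Proof.
move=> /getsw [k1 [i1 [k2 [i2 /and3P [hs hv hw]]]]] vI wK.
have hs' := hs; case/and5P: hs' => hk1 hk2 hi1 hi2 _.
have ni1 : i1 \notin K by rewrite -hKI.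
have ni2 : i2 \notin K by rewrite -hKI.
have nk1 : k1 \notin I by rewrite hKI hk1.
have nk2 : k2 \notin I by rewrite hKI hk2.
move: hv hw; rewrite !inE.
case/or4P => /eqP ?; case/or4P => /eqP ?; subst;
 move: ni1 ni2 nk1 nk2; rewrite ?vI ?wK; try (move=> /negP na /negP nb /negP nc /negP nd; exfalso;
  first [by apply: na|by apply: nb|by apply: nc|by apply: nd]).
all: move=> *; first [by left; do 2 eexists; exact hs
  | by left; do 2 eexists; exact (swC hs)
  | by right; do 2 eexists; exact hs
  | by right; do 2 eexists; exact (swC hs)].
Qed.

Lemma shapeKK v w : A4 e v w -> v \in K -> w \in K -> v != w ->
  exists a b, sw v a w b.
Proof.
move=> /getsw [k1 [i1 [k2 [i2 /and3P [hs hv hw]]]]] vK wK vw.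
have hs' := hs; case/and5P: hs' => hk1 hk2 hi1 hi2 _.
have ni1 : i1 \notin K by rewrite -hKI.
have ni2 : i2 \notin K by rewrite -hKI.
move: hv hw vw; rewrite !inE.
case/or4P => /eqP ?; case/or4P => /eqP ?; subst; rewrite ?eqxx //;
 move: ni1 ni2; rewrite ?vK ?wK //.
all: move=> *; first [by do 2 eexists; exact hs
  | by do 2 eexists; exact (swC hs)].
Qed.

Lemma mksw k1 i1 k2 i2 : k1 \in K -> k2 \in K -> i1 \in I -> i2 \in I ->
  k1 != k2 -> e k1 i1 -> e k2 i2 -> ~~ e k1 i2 -> ~~ e k2 i1 -> sw k1 i1 k2 i2.
Proof. by move=> *; apply/and5P; split=> //; apply/and5P. Qed.

End Aux.

Lemma fin1 (T : finType) (e : rel T) (I : {set T}) u z :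
  A4 e u z -> u \in I -> u != z ->
  exists p : seq T,
    [/\ path (A4 e) u p, last u p = z, uniq (u :: p),
        all (fun v => (v == z) || (v \in I)) (u :: p)
      & size (u :: p) <= 4].
Proof.
move=> h uI uz; exists [:: z]; split => //=; rewrite ?h ?inE ?uz ?uI ?eqxx ?orbT //.
Qed.

Lemma fin3 (T : finType) (e : rel T) (I : {set T}) u y i z :
  A4 e u y -> A4 e y i -> A4 e i z -> u \in I -> y \in I -> i \in I ->
  u != y -> u != i -> y != i -> u != z -> y != z -> i != z ->
  exists p : seq T,
    [/\ path (A4 e) u p, last u p = z, uniq (u :: p),
        all (fun v => (v == z) || (v \in I)) (u :: p)
      & size (u :: p) <= 4].
Proof.
move=> h1 h2 h3 uI yI iI uy ui yi uz yz iz; exists [:: y; i; z]; split => //=.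
  by rewrite h1 h2 h3.
by rewrite !inE !negb_or uy ui uz yi yz iz.
by rewrite uI yI iI eqxx !orbT.
Qed.


Theorem lemma2p3 (T : finType) (e : rel T) (K I : {set T}) (u z x : T) :
  simple_graph e -> split_bipartition e K I ->
  u \in I -> z \in K -> x \in K ->
  uniq [:: u; x; z] -> A4 e u x -> A4 e x z ->
  exists p : seq T,
    [/\ path (A4 e) u p, last u p = z, uniq (u :: p),
        all (fun v => (v == z) || (v \in I)) (u :: p)
      & size (u :: p) <= 4].
Proof.
move=> [hsym hirr] hsp uI zK xK hu hux hxz.
move: hu; rewrite /= !inE !negb_or => /and3P [/andP [ux uz] xz _].
have [i [j swx]] := shapeKK hsym hsp hxz xK zK xz.
case/and5P: (swx) => _ _ iI jI /and5P [_ exi ezj nxj nzi].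
have zx : z != x by rewrite eq_sym.
have iz : i != z by rewrite eq_sym (neqKI hsp zK iI).
have jz : j != z by rewrite eq_sym (neqKI hsp zK jI).
have [[w [y sw1]]|[w [y sw1]]] := shapeIK hsym hsp hux uI xK.
- case/and5P: (sw1) => _ wK _ yI /and5P [xw exu ewy nxy nwu].
  have yz : y != z by rewrite eq_sym (neqKI hsp zK yI).
  case ezu: (e z u).
  + case ezy: (e z y).
    * have s2 : sw e K I z y x i := mksw zK xK yI iI zx ezy exi nzi nxy.
      have uy : u != y := neqE exu nxy.
      have yi : y != i by rewrite eq_sym (neqE exi nxy).
      apply: (fin3 (y:=y) (i:=i)) => //.
      - by apply: (mkA4 hsym hsp sw1) => //; rewrite !inE eqxx ?orbT.
      - by apply: (mkA4 hsym hsp s2) => //; rewrite !inE eqxx ?orbT.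
      - by apply: (mkA4 hsym hsp swx) => //; rewrite !inE eqxx ?orbT.
      - exact: neqE ezu nzi.
    * have zw : z != w by apply/eqP => zw; move: ewy; rewrite -zw ezy.
      have s2 : sw e K I z u w y := mksw zK wK uI yI zw ezu ewy (negbT ezy) nwu.
      by apply: fin1 => //; apply: (mkA4 hsym hsp s2) => //; rewrite !inE eqxx ?orbT.
  + have s2 : sw e K I x u z j := mksw xK zK uI jI xz exu ezj nxj (negbT ezu).
    by apply: fin1 => //; apply: (mkA4 hsym hsp s2) => //; rewrite !inE eqxx ?orbT.
- case/and5P: (sw1) => wK _ _ yI /and5P [wx ewu exy nwy nxu].
  have yz : y != z by rewrite eq_sym (neqKI hsp zK yI).
  case ezu: (e z u).
  + have s2 : sw e K I z u x i := mksw zK xK uI iI zx ezu exi nzi nxu.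
    by apply: fin1 => //; apply: (mkA4 hsym hsp s2) => //; rewrite !inE eqxx ?orbT.
  + have wz : w != z by apply/eqP => wz; move: ewu; rewrite wz ezu.
    case ewj: (e w j).
    * have s2 : sw e K I w j x y := mksw wK xK jI yI wx ewj exy nwy nxj.
      have uy : u != y := neqE ewu nwy.
      have uj : u != j by rewrite eq_sym (neqE ezj (negbT ezu)).
      have yj : y != j := neqE exy nxj.
      apply: (fin3 (y:=y) (i:=j)) => //.
      - by apply: (mkA4 hsym hsp sw1) => //; rewrite !inE eqxx ?orbT.
      - by apply: (mkA4 hsym hsp s2) => //; rewrite !inE eqxx ?orbT.
      - by apply: (mkA4 hsym hsp swx) => //; rewrite !inE eqxx ?orbT.
    * have s2 : sw e K I w u z j := mksw wK zK uI jI wz ewu ezj (negbT ewj) (negbT ezu).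
      by apply: fin1 => //; apply: (mkA4 hsym hsp s2) => //; rewrite !inE eqxx ?orbT.
Qed.
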